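(* Let $\Gamma\subset\mathbb{R}^2$ be a lattice, $\Lambda>0$ smooth and $\Gamma$-periodic, and let $F=\sum_{i=0}^4a_ip_1^{4-i}p_2^i$ with smooth $\Gamma$-periodic $a_i$ satisfy $\{H,F\}=0$, $H=\frac{p_1^2+p_2^2}{2\Lambda}$, with $a_3=a_1$ and $a_4=c_2+a_2-a_0$ for a constant $c_2$ (Kolokoltsov relations with $c_1=0$). Define the constants $$a_{11}=\tfrac12\big\langle(2c_2-2a_0+a_2)\Lambda\big\rangle,\quad a_{22}=\tfrac12\langle(2a_0-a_2)\Lambda\rangle,\quad a_{12}=\tfrac12\langle a_1\Lambda\rangle .$$ Let $\lambda$ be a smooth $\Gamma$-periodic solution of $\Delta\lambda=2c_2\Lambda-2a_{11}-2a_{22}$. Then $$\lambda_{xy}(\lambda_{yyyy}-\lambda_{xxxx})+3(\lambda_{yyy}\lambda_{xyy}-\lambda_{xxy}\lambda_{xxx})+2(\lambda_{yy}\lambda_{xyyy}-\lambda_{xx}\lambda_{xxxy})+4a_{22}\lambda_{xyyy}-4a_{11}\lambda_{xxxy}+2a_{12}(\lambda_{yyyy}-\lambda_{xxxx})=0 .$$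
   Context: $\{H,F\}=\sum_{j=1}^2\left(\frac{\partial H}{\partial q^j}\frac{\partial F}{\partial p_j}-\frac{\partial H}{\partial p_j}\frac{\partial F}{\partial q^j}\right)$, $(q^1,q^2)=(x,y)$; so $F$ is a quartic first integral of the geodesic flow of $\Lambda(dx^2+dy^2)$ on $\mathbb{R}^2/\Gamma$. $\langle g\rangle$ denotes the average of a $\Gamma$-periodic function $g$ over a fundamental domain of $\Gamma$. $\Delta=\partial_x^2+\partial_y^2$. *)

(* Defs.v *)
From Stdlib Require Import Reals.
Open Scope R_scope.

Definition cont2 (f : R -> R -> R) (x y : R) : Prop :=
  forall eps, 0 < eps -> exists delta, 0 < delta /\
    forall u v, Rabs (u - x) < delta -> Rabs (v - y) < delta ->
      Rabs (f u v - f x y) < eps.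

(* D i j = d^i/dx^i d^j/dy^j f : the family of all partial derivatives of f,
   each jointly continuous (so f is C^infty). *)
Definition deriv_family (f : R -> R -> R) (D : nat -> nat -> R -> R -> R) : Prop :=
  (forall x y, D 0%nat 0%nat x y = f x y) /\
  (forall i j x y, derivable_pt_lim (fun s => D i j s y) x (D (S i) j x y)) /\
  (forall i j x y, derivable_pt_lim (fun t => D i j x t) y (D i (S j) x y)) /\
  (forall i j x y, cont2 (D i j) x y).

Definition smooth2 (f : R -> R -> R) : Prop := exists D, deriv_family f D.

(* The lattice Gamma = Z e1 + Z e2 with e1=(e1x,e1y), e2=(e2x,e2y) independent. *)
Definition lattice_basis (e1x e1y e2x e2y : R) : Prop := e1x * e2y - e1y * e2x <> 0.

Definition periodic (e1x e1y e2x e2y : R) (f : R -> R -> R) : Prop :=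
  forall x y, f (x + e1x) (y + e1y) = f x y /\ f (x + e2x) (y + e2y) = f x y.

Definition integral01 (h : R -> R) (v : R) : Prop :=
  exists pr : Riemann_integrable h 0 1, RiemannInt pr = v.

(* <g> = v : average over the fundamental parallelogram {s e1 + t e2 : s,t in [0,1]},
   computed in lattice coordinates (the Jacobian cancels in the average). *)
Definition is_avg (e1x e1y e2x e2y : R) (g : R -> R -> R) (v : R) : Prop :=
  exists inner : R -> R,
    (forall t, integral01 (fun s => g (s * e1x + t * e2x) (s * e1y + t * e2y)) (inner t)) /\
    integral01 inner v.

(* {H,F} = 0 for phase-space functions of (x,y,p1,p2), with the bracket
   sum_j (dH/dq^j dF/dp_j - dH/dp_j dF/dq^j), stated for all values of the
   partial derivatives (which are unique when they exist). *)
Definition poisson_commute (H F : R -> R -> R -> R -> R) : Prop :=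
  forall x y p1 p2 Hx Hy Hp1 Hp2 Fx Fy Fp1 Fp2,
    derivable_pt_lim (fun s => H s y p1 p2) x Hx ->
    derivable_pt_lim (fun s => H x s p1 p2) y Hy ->
    derivable_pt_lim (fun s => H x y s p2) p1 Hp1 ->
    derivable_pt_lim (fun s => H x y p1 s) p2 Hp2 ->
    derivable_pt_lim (fun s => F s y p1 p2) x Fx ->
    derivable_pt_lim (fun s => F x s p1 p2) y Fy ->
    derivable_pt_lim (fun s => F x y s p2) p1 Fp1 ->
    derivable_pt_lim (fun s => F x y p1 s) p2 Fp2 ->
    (Hx * Fp1 - Hp1 * Fx) + (Hy * Fp2 - Hp2 * Fy) = 0.

(* Main.v *)
Require Import Defs.
From Stdlib Require Import Reals Lra Lia Psatz FunctionalExtensionality ZArith.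
From Coquelicot Require Import Coquelicot.
Open Scope R_scope.

Lemma cont2_2d f x y : cont2 f x y -> continuity_2d_pt f x y.
Proof.
  intros H eps. destruct (H eps (cond_pos eps)) as [d [Hd Hd']].
  exists (mkposreal d Hd). intros u v Hu Hv. apply Hd'; assumption.
Qed.

Lemma cont2_of_2d f x y : continuity_2d_pt f x y -> cont2 f x y.
Proof.
  intros H eps He. destruct (H (mkposreal eps He)) as [d Hd].
  exists d. split. apply cond_pos. intros u v Hu Hv. apply (Hd u v Hu Hv).
Qed.

Lemma cont2_plus f g x y : cont2 f x y -> cont2 g x y -> cont2 (fun u v => f u v + g u v) x y.
Proof. intros; apply cont2_of_2d, continuity_2d_pt_plus; apply cont2_2d; auto. Qed.
Lemma cont2_mult f g x y : cont2 f x y -> cont2 g x y -> cont2 (fun u v => f u v * g u v) x y.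
Proof. intros; apply cont2_of_2d, continuity_2d_pt_mult; apply cont2_2d; auto. Qed.
Lemma cont2_const c x y : cont2 (fun _ _ => c) x y.
Proof. apply cont2_of_2d, continuity_2d_pt_const. Qed.
Lemma cont2_ext f g x y : (forall u v, f u v = g u v) -> cont2 f x y -> cont2 g x y.
Proof. intros E H eps He. destruct (H eps He) as [d [Hd Hd']]. exists d; split; auto.
  intros u v Hu Hv. rewrite <- !E. auto. Qed.

Lemma diff_of_partials k kx ky x y :
  (forall u v, derivable_pt_lim (fun s => k s v) u (kx u v)) ->
  (forall u v, derivable_pt_lim (fun t => k u t) v (ky u v)) ->
  cont2 kx x y -> differentiable_pt_lim k x y (kx x y) (ky x y).
Proof.
  intros Hx Hy Hc eps.
  assert (He2 : 0 < eps / 2) by (generalize (cond_pos eps); lra).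
  destruct (Hc _ He2) as [d1 [Hd1 Hd1']].
  destruct (Hy x y _ He2) as [d2 Hd2].
  exists (mkposreal (Rmin d1 d2) (Rmin_pos _ _ Hd1 (cond_pos d2))).
  intros u v Hu Hv. simpl in Hu, Hv.
  assert (Hu1 : Rabs (u - x) < d1) by (eapply Rlt_le_trans; [apply Hu| apply Rmin_l]).
  assert (Hv1 : Rabs (v - y) < d1) by (eapply Rlt_le_trans; [apply Hv| apply Rmin_l]).
  assert (Hv2 : Rabs (v - y) < d2) by (eapply Rlt_le_trans; [apply Hv| apply Rmin_r]).
  destruct (MVT_gen (fun s => k s v) x u (fun s => kx s v)) as [c [Hc1 Hc2]].
  { intros z _. apply is_derive_Reals. apply Hx. }
  { intros z _. apply derivable_continuous_pt. exists (kx z v). apply Hx. }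
  assert (Hcd : Rabs (c - x) < d1).
  { apply Rle_lt_trans with (Rabs (u - x)); auto.
    unfold Rmin, Rmax in Hc1; destruct (Rle_dec x u); unfold Rabs;
    repeat destruct Rcase_abs; lra. }
  specialize (Hd1' c v Hcd Hv1).
  assert (Hvy : Rabs (k x v - k x y - ky x y * (v - y)) <= eps/2 * Rabs (v - y)).
  { destruct (Req_dec v y) as [E|E].
    - subst. replace (k x y - k x y - ky x y * (y - y)) with 0 by ring.
      rewrite Rabs_R0. apply Rmult_le_pos; [lra| apply Rabs_pos].
    - specialize (Hd2 (v - y)). replace (y + (v - y)) with v in Hd2 by ring.
      assert (Hne: v - y <> 0) by lra.
      specialize (Hd2 Hne Hv2).
      replace (k x v - k x y - ky x y * (v - y)) with (((k x v - k x y) / (v - y) - ky x y) * (v - y)) by (field; auto).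
      rewrite Rabs_mult. apply Rmult_le_compat_r. apply Rabs_pos. lra. }
  replace (k u v - k x y - (kx x y * (u - x) + ky x y * (v - y)))
    with ((kx c v - kx x y) * (u - x) + (k x v - k x y - ky x y * (v - y))).
  2:{ replace (k u v) with (k x v + kx c v * (u - x)) by lra. ring. }
  eapply Rle_trans. apply Rabs_triang. rewrite Rabs_mult.
  assert (Rabs (u - x) <= Rmax (Rabs (u - x)) (Rabs (v - y))) by apply Rmax_l.
  assert (Rabs (v - y) <= Rmax (Rabs (u - x)) (Rabs (v - y))) by apply Rmax_r.
  assert (0 <= Rabs (u - x)) by apply Rabs_pos.
  assert (Rabs (kx c v - kx x y) * Rabs (u - x) <= eps/2 * Rabs (u-x)).
  { apply Rmult_le_compat_r; lra. }
  nra.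
Qed.

Lemma chain_line k kx ky p q r w s0 :
  (forall u v, derivable_pt_lim (fun s => k s v) u (kx u v)) ->
  (forall u v, derivable_pt_lim (fun t => k u t) v (ky u v)) ->
  (forall u v, cont2 kx u v) ->
  derivable_pt_lim (fun s => k (s * p + q) (s * r + w)) s0
    (kx (s0 * p + q) (s0 * r + w) * p + ky (s0 * p + q) (s0 * r + w) * r).
Proof.
  intros Hx Hy Hc.
  apply (derivable_pt_lim_comp_2d k (fun s => s * p + q) (fun s => s * r + w)).
  - apply diff_of_partials; auto.
  - apply is_derive_Reals. auto_derive; auto; ring.
  - apply is_derive_Reals. auto_derive; auto; ring.
Qed.
Lemma cont_ed (f : R -> R) x :
  (forall eps, 0 < eps -> exists d, 0 < d /\ forall z, Rabs (z - x) < d -> Rabs (f z - f x) < eps) ->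
  continuous f x.
Proof.
  intros H. apply continuity_pt_filterlim. intros eps He.
  destruct (H eps He) as [d [Hd H']]. exists d. split. lra.
  intros z [_ Hz]. apply H'. exact Hz.
Qed.

Lemma cont2_lin g a b c d s t :
  cont2 g (s * a + t * b) (s * c + t * d) ->
  cont2 (fun s t => g (s * a + t * b) (s * c + t * d)) s t.
Proof.
  intros H eps He. destruct (H eps He) as [del [Hdel H']].
  set (K := Rabs a + Rabs b + Rabs c + Rabs d + 1).
  assert (HK : 0 < K) by (unfold K; generalize (Rabs_pos a) (Rabs_pos b) (Rabs_pos c) (Rabs_pos d); lra).
  exists (del / (2 * K)). split. apply Rdiv_lt_0_compat; lra.
  intros u v Hu Hv. apply H'.
  - replace (u * a + v * b - (s * a + t * b)) with ((u - s) * a + (v - t) * b) by ring.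
    eapply Rle_lt_trans. apply Rabs_triang. rewrite !Rabs_mult.
    assert (Rabs (u - s) * Rabs a <= del / (2*K) * Rabs a) by (apply Rmult_le_compat_r; [apply Rabs_pos| lra]).
    assert (Rabs (v - t) * Rabs b <= del / (2*K) * Rabs b) by (apply Rmult_le_compat_r; [apply Rabs_pos| lra]).
    assert (del / (2*K) * (Rabs a + Rabs b) < del).
    { apply Rlt_le_trans with (del / (2 * K) * K).
      apply Rmult_lt_compat_l. apply Rdiv_lt_0_compat; lra.
      unfold K; generalize (Rabs_pos c) (Rabs_pos d); lra.
      replace (del / (2 * K) * K) with (del / 2) by (field; lra); lra. }
    lra.
  - replace (u * c + v * d - (s * c + t * d)) with ((u - s) * c + (v - t) * d) by ring.
    eapply Rle_lt_trans. apply Rabs_triang. rewrite !Rabs_mult.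
    assert (Rabs (u - s) * Rabs c <= del / (2*K) * Rabs c) by (apply Rmult_le_compat_r; [apply Rabs_pos| lra]).
    assert (Rabs (v - t) * Rabs d <= del / (2*K) * Rabs d) by (apply Rmult_le_compat_r; [apply Rabs_pos| lra]).
    assert (del / (2*K) * (Rabs c + Rabs d) < del).
    { apply Rlt_le_trans with (del / (2 * K) * K).
      apply Rmult_lt_compat_l. apply Rdiv_lt_0_compat; lra.
      unfold K; generalize (Rabs_pos a) (Rabs_pos b); lra.
      replace (del / (2 * K) * K) with (del / 2) by (field; lra); lra. }
    lra.
Qed.

Lemma cont2_slice1 G s t : cont2 G s t -> continuous (fun s => G s t) s.
Proof.
  intros H. apply cont_ed. intros eps He. destruct (H eps He) as [d [Hd H']].
  exists d; split; auto. intros z Hz. apply H'; auto. rewrite Rminus_eq_0, Rabs_R0; auto.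
Qed.
Lemma cont2_slice2 G s t : cont2 G s t -> continuous (fun t => G s t) t.
Proof.
  intros H. apply cont_ed. intros eps He. destruct (H eps He) as [d [Hd H']].
  exists d; split; auto. intros z Hz. apply H'; auto. rewrite Rminus_eq_0, Rabs_R0; auto.
Qed.

Lemma ex_RInt_slice G t : (forall s t, cont2 G s t) -> ex_RInt (fun s => G s t) 0 1.
Proof. intros H. apply (ex_RInt_continuous (V := R_CompleteNormedModule)). intros z _. apply cont2_slice1. auto. Qed.

Lemma param_cont G t0 : (forall s t, cont2 G s t) ->
  continuous (fun t => RInt (fun s => G s t) 0 1) t0.
Proof.
  intros H. apply cont_ed. intros eps He.
  destruct (uniform_continuity_2d_1d' (fun t s => G s t) 0 1 t0) with (eps := mkposreal (eps/2) ltac:(lra)) as [d Hd].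
  { intros x _. apply cont2_2d. intros e He'. destruct (H x t0 e He') as [d [Hd' H']].
    exists d; split; auto. }
  exists d. split. apply cond_pos. intros z Hz.
  assert (E : RInt (fun s => G s z - G s t0) 0 1 = RInt (fun s => G s z) 0 1 - RInt (fun s => G s t0) 0 1).
  { exact (RInt_minus (V := R_CompleteNormedModule) (fun s => G s z) (fun s => G s t0) 0 1 (ex_RInt_slice G z H) (ex_RInt_slice G t0 H)). }
  rewrite <- E.
  eapply Rle_lt_trans. apply abs_RInt_le_const with (M := eps/2). lra.
  exact (ex_RInt_minus (V := R_NormedModule) (fun s => G s z) (fun s => G s t0) 0 1 (ex_RInt_slice G z H) (ex_RInt_slice G t0 H)).
  intros s Hs. left. apply (Hd s t0 s z Hs); auto.
  split; generalize (cond_pos d); lra.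
  unfold Rabs in Hz; destruct Rcase_abs in Hz; lra.
  rewrite Rminus_eq_0, Rabs_R0. apply cond_pos.
  lra.
Qed.
Definition avgC (e1x e1y e2x e2y : R) (g : R -> R -> R) (v : R) : Prop :=
  exists inner : R -> R,
    (forall t, is_RInt (fun s => g (s * e1x + t * e2x) (s * e1y + t * e2y)) 0 1 (inner t)) /\
    is_RInt inner 0 1 v.

Lemma i01_to h v : integral01 h v -> is_RInt h 0 1 v.
Proof.
  intros [pr E]. rewrite <- E. rewrite <- RInt_Reals.
  apply (RInt_correct (V := R_CompleteNormedModule)). apply ex_RInt_Reals_1; auto.
Qed.
Lemma i01_of h v : is_RInt h 0 1 v -> integral01 h v.
Proof.
  intros H. assert (ex : ex_RInt h 0 1) by (exists v; auto).
  exists (ex_RInt_Reals_0 _ _ _ ex). rewrite <- RInt_Reals.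
  apply (is_RInt_unique (V := R_CompleteNormedModule)); auto.
Qed.

Lemma avg_to a b c d g v : is_avg a b c d g v -> avgC a b c d g v.
Proof. intros [inn [H1 H2]]. exists inn; split; [intros t; apply i01_to; auto| apply i01_to; auto]. Qed.
Lemma avg_of a b c d g v : avgC a b c d g v -> is_avg a b c d g v.
Proof. intros [inn [H1 H2]]. exists inn; split; [intros t; apply i01_of; auto| apply i01_of; auto]. Qed.

Lemma avgC_unique a b c d g v w : avgC a b c d g v -> avgC a b c d g w -> v = w.
Proof.
  intros [i1 [H1 H2]] [i2 [H3 H4]].
  assert (E : forall t, i1 t = i2 t).
  { intros t. rewrite <- (is_RInt_unique (V := R_CompleteNormedModule) _ _ _ _ (H1 t)).
    apply (is_RInt_unique (V := R_CompleteNormedModule)); auto. }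
  rewrite <- (is_RInt_unique (V := R_CompleteNormedModule) _ _ _ _ H2).
  apply (is_RInt_unique (V := R_CompleteNormedModule)).
  apply (is_RInt_ext (V := R_NormedModule) i2). intros; rewrite E; auto. auto.
Qed.

Lemma avgC_lin a b c d g h v w p q :
  avgC a b c d g v -> avgC a b c d h w ->
  avgC a b c d (fun x y => p * g x y + q * h x y) (p * v + q * w).
Proof.
  intros [i1 [H1 H2]] [i2 [H3 H4]].
  exists (fun t => p * i1 t + q * i2 t). split.
  - intros t. apply (is_RInt_plus (V := R_NormedModule)
      (fun s => p * g (s * a + t * c) (s * b + t * d)) (fun s => q * h (s * a + t * c) (s * b + t * d))).
    apply (is_RInt_scal (V := R_NormedModule) (fun s => g (s * a + t * c) (s * b + t * d))); auto.
    apply (is_RInt_scal (V := R_NormedModule) (fun s => h (s * a + t * c) (s * b + t * d))); auto.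
  - apply (is_RInt_plus (V := R_NormedModule) (fun t => p * i1 t) (fun t => q * i2 t)).
    apply (is_RInt_scal (V := R_NormedModule)); auto.
    apply (is_RInt_scal (V := R_NormedModule)); auto.
Qed.

Lemma is_RInt_const01 (k : R) : is_RInt (V := R_NormedModule) (fun _ => k) 0 1 k.
Proof.
  pose proof (is_RInt_const (V := R_NormedModule) 0 1 k) as H0.
  unfold scal in H0; simpl in H0; unfold mult in H0; simpl in H0.
  replace ((1 - 0) * k) with k in H0 by ring. exact H0.
Qed.

Lemma avgC_const a b c d k : avgC a b c d (fun _ _ => k) k.
Proof. exists (fun _ => k). split. intros t. apply is_RInt_const01. apply is_RInt_const01. Qed.

Lemma avgC_ext a b c d g h v : (forall x y, g x y = h x y) -> avgC a b c d g v -> avgC a b c d h v.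
Proof.
  intros E [i1 [H1 H2]]. exists i1; split; auto. intros t.
  apply (is_RInt_ext (V := R_NormedModule) (fun s => g (s * a + t * c) (s * b + t * d))); auto.
Qed.

Lemma cont_ed_inv (f : R -> R) x : continuous f x ->
  forall eps, 0 < eps -> exists d, 0 < d /\ forall z, Rabs (z - x) < d -> Rabs (f z - f x) < eps.
Proof.
  intros H eps He. apply continuity_pt_filterlim in H.
  destruct (H eps He) as [d [Hd Hd']]. exists d; split; auto. intros z Hz.
  destruct (Req_dec z x) as [E|E].
  - subst. rewrite Rminus_eq_0, Rabs_R0; auto.
  - apply (Hd' z). split. split. exact I. auto. exact Hz.
Qed.

Lemma nonneg_zero_int (f : R -> R) :
  (forall x, 0 <= x <= 1 -> continuous f x) -> (forall x, 0 <= x <= 1 -> 0 <= f x) ->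
  is_RInt f 0 1 0 -> forall x, 0 <= x <= 1 -> f x = 0.
Proof.
  intros Hc Hp Hi x0 Hx0.
  destruct (Req_dec (f x0) 0) as [E|E]; auto. exfalso.
  assert (Hpos : 0 < f x0) by (generalize (Hp x0 Hx0); lra).
  destruct (cont_ed_inv f x0 (Hc x0 Hx0) (f x0 / 2) ltac:(lra)) as [d [Hd Hd']].
  set (a := Rmax 0 (x0 - d/2)). set (b := Rmin 1 (x0 + d/2)).
  assert (Ha : 0 <= a <= x0) by (unfold a, Rmax; destruct Rle_dec; lra).
  assert (Hb : x0 <= b <= 1) by (unfold b, Rmin; destruct Rle_dec; lra).
  assert (Hab : a < b).
  { unfold a, b, Rmax, Rmin. repeat destruct Rle_dec; try lra.
    }
  assert (Hex : forall u v, 0 <= u -> u <= v -> v <= 1 -> ex_RInt f u v).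
  { intros u v H1 H2 H3. apply (ex_RInt_continuous (V := R_CompleteNormedModule)).
    intros z Hz. apply Hc. unfold Rmin, Rmax in Hz; destruct Rle_dec; lra. }
  assert (I1 : 0 <= RInt f 0 a) by (apply RInt_ge_0; try lra; [apply Hex; lra| intros; apply Hp; lra]).
  assert (I3 : 0 <= RInt f b 1) by (apply RInt_ge_0; try lra; [apply Hex; lra| intros; apply Hp; lra]).
  assert (I2 : (f x0 / 2) * (b - a) <= RInt f a b).
  { assert (E2 : RInt (fun _ => f x0 / 2) a b = (f x0 / 2) * (b - a)).
    { rewrite RInt_const. unfold scal; simpl; unfold mult; simpl. ring. }
    rewrite <- E2. apply RInt_le. lra. apply ex_RInt_const. apply Hex; lra.
    intros z Hz. assert (Hzd : Rabs (z - x0) < d).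
    { unfold a, b, Rmax, Rmin in Hz. repeat destruct Rle_dec in Hz; unfold Rabs; destruct Rcase_abs; lra. }
    specialize (Hd' z Hzd).
    unfold Rabs in Hd'; destruct Rcase_abs in Hd'; lra. }
  assert (Etot : RInt f 0 1 = RInt f 0 a + RInt f a b + RInt f b 1).
  { rewrite <- (RInt_Chasles (V := R_CompleteNormedModule) f 0 a 1) by (apply Hex; lra).
    rewrite <- (RInt_Chasles (V := R_CompleteNormedModule) f a b 1) by (apply Hex; lra).
    unfold plus; simpl. ring. }
  rewrite (is_RInt_unique (V := R_CompleteNormedModule) _ _ _ _ Hi) in Etot.
  assert (0 < f x0 / 2 * (b - a)) by (apply Rmult_lt_0_compat; lra).
  lra.
Qed.
Section Per.
Variables e1x e1y e2x e2y : R.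

Lemma per_nat1 f : periodic e1x e1y e2x e2y f -> forall n x y,
  f (x + INR n * e1x) (y + INR n * e1y) = f x y.
Proof.
  intros H n. induction n; intros x y.
  - simpl. rewrite !Rmult_0_l, !Rplus_0_r. auto.
  - rewrite S_INR. replace (x + (INR n + 1) * e1x) with ((x + INR n * e1x) + e1x) by ring.
    replace (y + (INR n + 1) * e1y) with ((y + INR n * e1y) + e1y) by ring.
    rewrite (proj1 (H _ _)). auto.
Qed.
Lemma per_nat2 f : periodic e1x e1y e2x e2y f -> forall n x y,
  f (x + INR n * e2x) (y + INR n * e2y) = f x y.
Proof.
  intros H n. induction n; intros x y.
  - simpl. rewrite !Rmult_0_l, !Rplus_0_r. auto.
  - rewrite S_INR. replace (x + (INR n + 1) * e2x) with ((x + INR n * e2x) + e2x) by ring.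
    replace (y + (INR n + 1) * e2y) with ((y + INR n * e2y) + e2y) by ring.
    rewrite (proj2 (H _ _)). auto.
Qed.
Lemma per_Z1 f : periodic e1x e1y e2x e2y f -> forall z x y,
  f (x + IZR z * e1x) (y + IZR z * e1y) = f x y.
Proof.
  intros H z x y. destruct (Z.le_gt_cases 0 z) as [Hz|Hz].
  - rewrite <- (Z2Nat.id z Hz), <- INR_IZR_INZ. apply per_nat1; auto.
  - assert (Hz' : (0 <= - z)%Z) by lia.
    replace z with (- Z.of_nat (Z.to_nat (- z)))%Z by (rewrite Z2Nat.id; lia).
    rewrite opp_IZR, <- INR_IZR_INZ.
    set (n := Z.to_nat (-z)).
    rewrite <- (per_nat1 f H n (x + - INR n * e1x) (y + - INR n * e1y)).
    f_equal; ring.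
Qed.
Lemma per_Z2 f : periodic e1x e1y e2x e2y f -> forall z x y,
  f (x + IZR z * e2x) (y + IZR z * e2y) = f x y.
Proof.
  intros H z x y. destruct (Z.le_gt_cases 0 z) as [Hz|Hz].
  - rewrite <- (Z2Nat.id z Hz), <- INR_IZR_INZ. apply per_nat2; auto.
  - assert (Hz' : (0 <= - z)%Z) by lia.
    replace z with (- Z.of_nat (Z.to_nat (- z)))%Z by (rewrite Z2Nat.id; lia).
    rewrite opp_IZR, <- INR_IZR_INZ.
    set (n := Z.to_nat (-z)).
    rewrite <- (per_nat2 f H n (x + - INR n * e2x) (y + - INR n * e2y)).
    f_equal; ring.
Qed.

Lemma reduce f : lattice_basis e1x e1y e2x e2y -> periodic e1x e1y e2x e2y f ->
  forall x y, exists s t, 0 <= s <= 1 /\ 0 <= t <= 1 /\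
    f x y = f (s * e1x + t * e2x) (s * e1y + t * e2y).
Proof.
  intros HG H x y. unfold lattice_basis in HG.
  set (S := (x * e2y - y * e2x) / (e1x * e2y - e1y * e2x)).
  set (T := (e1x * y - e1y * x) / (e1x * e2y - e1y * e2x)).
  assert (Ex : x = S * e1x + T * e2x) by (unfold S, T; field; auto).
  assert (Ey : y = S * e1y + T * e2y) by (unfold S, T; field; auto).
  destruct (base_Int_part S) as [HS1 HS2]. destruct (base_Int_part T) as [HT1 HT2].
  exists (S - IZR (Int_part S)), (T - IZR (Int_part T)).
  split. lra. split. lra.
  rewrite Ex, Ey.
  set (s0 := S - IZR (Int_part S)). set (t0 := T - IZR (Int_part T)).
  rewrite <- (per_Z1 f H (Int_part S) (s0 * e1x + t0 * e2x) (s0 * e1y + t0 * e2y)).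
  rewrite <- (per_Z2 f H (Int_part T) (s0 * e1x + t0 * e2x + IZR (Int_part S) * e1x) (s0 * e1y + t0 * e2y + IZR (Int_part S) * e1y)).
  unfold s0, t0. f_equal; ring.
Qed.

End Per.
Lemma avg_pos_zero e1x e1y e2x e2y q :
  lattice_basis e1x e1y e2x e2y -> periodic e1x e1y e2x e2y q ->
  (forall x y, cont2 q x y) -> (forall x y, 0 <= q x y) ->
  avgC e1x e1y e2x e2y q 0 -> forall x y, q x y = 0.
Proof.
  intros HG Hp Hc Hnn [inner [H1 H2]].
  set (Q := fun s t => q (s * e1x + t * e2x) (s * e1y + t * e2y)).
  assert (HQ : forall s t, cont2 Q s t) by (intros; apply cont2_lin; auto).
  assert (Ein : forall t, inner t = RInt (fun s => Q s t) 0 1).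
  { intros t. symmetry. apply (is_RInt_unique (V := R_CompleteNormedModule)). apply H1. }
  assert (Hin0 : forall t, 0 <= t <= 1 -> inner t = 0).
  { apply nonneg_zero_int; auto.
    - intros t _. apply (continuous_ext (fun t => RInt (fun s => Q s t) 0 1)).
      intros; rewrite Ein; auto. apply param_cont; auto.
    - intros t _. apply (is_RInt_ge_0 _ 0 1 _ ltac:(lra) (H1 t)). intros; apply Hnn. }
  assert (HQ0 : forall s t, 0 <= s <= 1 -> 0 <= t <= 1 -> Q s t = 0).
  { intros s t Hs Ht. apply (nonneg_zero_int (fun s => Q s t)); auto.
    - intros z _. apply cont2_slice1; auto.
    - intros; apply Hnn.
    - pose proof (H1 t) as H3. rewrite (Hin0 t Ht) in H3. exact H3. }
  intros x y. destruct (reduce e1x e1y e2x e2y q HG Hp x y) as [s [t [Hs [Ht E]]]].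
  rewrite E. apply (HQ0 s t Hs Ht).
Qed.
Lemma is_RInt_val (f : R -> R) a b (l l' : R) : is_RInt (V := R_NormedModule) f a b l -> l = l' -> is_RInt (V := R_NormedModule) f a b l'.
Proof. intros H E; subst; auto. Qed.

Section DerivAvg.
Variables e1x e1y e2x e2y : R.
Variables k kx ky : R -> R -> R.
Hypothesis Hper : periodic e1x e1y e2x e2y k.
Hypothesis Hkx : forall u v, derivable_pt_lim (fun s => k s v) u (kx u v).
Hypothesis Hky : forall u v, derivable_pt_lim (fun t => k u t) v (ky u v).
Hypothesis Ckx : forall u v, cont2 kx u v.
Hypothesis Cky : forall u v, cont2 ky u v.

Lemma cont2_comb p r : forall u v, cont2 (fun x y => kx x y * p + ky x y * r) u v.
Proof. intros. apply cont2_plus; apply cont2_mult; auto; apply cont2_const. Qed.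

Lemma avg_dir_s : avgC e1x e1y e2x e2y (fun x y => kx x y * e1x + ky x y * e1y) 0.
Proof.
  exists (fun _ => 0). split; [| apply is_RInt_const01].
  intros t.
  assert (H := is_RInt_derive (V := R_CompleteNormedModule)
     (fun s => k (s * e1x + t * e2x) (s * e1y + t * e2y))
     (fun s => kx (s * e1x + t * e2x) (s * e1y + t * e2y) * e1x + ky (s * e1x + t * e2x) (s * e1y + t * e2y) * e1y) 0 1).
  cbv beta in H. eapply is_RInt_val. apply H.
  3:{ unfold minus, plus, opp; simpl. replace (1 * e1x + t * e2x) with ((0 * e1x + t * e2x) + e1x) by ring.
    replace (1 * e1y + t * e2y) with ((0 * e1y + t * e2y) + e1y) by ring.
    rewrite (proj1 (Hper _ _)). ring. }
  - intros s _. apply is_derive_Reals. apply chain_line; auto.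
  - intros s _. apply (cont2_slice1 (fun s t => kx (s * e1x + t * e2x) (s * e1y + t * e2y) * e1x + ky (s * e1x + t * e2x) (s * e1y + t * e2y) * e1y)).
    apply (cont2_lin (fun x y => kx x y * e1x + ky x y * e1y)). apply cont2_comb.
Qed.

Let K s t := k (s * e1x + t * e2x) (s * e1y + t * e2y).
Let Kt s t := kx (s * e1x + t * e2x) (s * e1y + t * e2y) * e2x + ky (s * e1x + t * e2x) (s * e1y + t * e2y) * e2y.

Lemma K_der s t : derivable_pt_lim (fun t => K s t) t (Kt s t).
Proof.
  unfold K, Kt.
  apply (derivable_pt_lim_ext (fun t => k (t * e2x + s * e1x) (t * e2y + s * e1y))).
  intros z; f_equal; ring.
  replace (s * e1x + t * e2x) with (t * e2x + s * e1x) by ring.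
  replace (s * e1y + t * e2y) with (t * e2y + s * e1y) by ring.
  apply chain_line; auto.
Qed.

Lemma K_cont s t : cont2 K s t.
Proof. unfold K. apply cont2_lin. apply cont2_of_2d. apply differentiable_continuity_pt. eexists; eexists.
  apply diff_of_partials; auto. Qed.

Lemma Kt_cont s t : cont2 Kt s t.
Proof. unfold Kt. apply (cont2_lin (fun x y => kx x y * e2x + ky x y * e2y)). apply cont2_comb. Qed.

Lemma Kt_cont_swap t s : continuity_2d_pt (fun u v => Kt v u) t s.
Proof.
  apply cont2_2d.
  apply (cont2_ext (fun u v => (fun x y => kx x y * e2x + ky x y * e2y) (u * e2x + v * e1x) (u * e2y + v * e1y))).
  { intros u v. unfold Kt. simpl. replace (v * e1x + u * e2x) with (u * e2x + v * e1x) by ring. replace (v * e1y + u * e2y) with (u * e2y + v * e1y) by ring. reflexivity. }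
  apply (cont2_lin (fun x y => kx x y * e2x + ky x y * e2y) e2x e1x e2y e1y t s). apply cont2_comb.
Qed.

Lemma J_der t : is_derive (fun t => RInt (fun s => K s t) 0 1) t (RInt (fun s => Kt s t) 0 1).
Proof.
  assert (H := is_derive_RInt_param (fun t s => K s t) 0 1 t).
  simpl in H.
  assert (E : RInt (fun s => Derive (fun u => K s u) t) 0 1 = RInt (fun s => Kt s t) 0 1).
  { apply (RInt_ext (V := R_CompleteNormedModule)). intros s _. apply is_derive_unique.
    apply is_derive_Reals. apply K_der. }
  rewrite <- E. apply H.
  - apply filter_forall. intros x s _. exists (Kt s x). apply is_derive_Reals, K_der.
  - intros s _. apply (continuity_2d_pt_ext (fun u v => Kt v u)).
    intros u v. symmetry. apply is_derive_unique. apply is_derive_Reals, K_der.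
    apply Kt_cont_swap.
  - apply filter_forall. intros x. apply ex_RInt_slice. apply K_cont.
Qed.

Lemma avg_dir_t : avgC e1x e1y e2x e2y (fun x y => kx x y * e2x + ky x y * e2y) 0.
Proof.
  exists (fun t => RInt (fun s => Kt s t) 0 1). split.
  - intros t. apply (RInt_correct (V := R_CompleteNormedModule) (fun s => Kt s t)).
    apply ex_RInt_slice. apply Kt_cont.
  - assert (H := is_RInt_derive (V := R_CompleteNormedModule)
       (fun t => RInt (fun s => K s t) 0 1) (fun t => RInt (fun s => Kt s t) 0 1) 0 1).
    cbv beta in H. eapply is_RInt_val. apply H.
    3:{ assert (E1 : RInt (fun s => K s 1) 0 1 = RInt (fun s => K s 0) 0 1).
      { apply (RInt_ext (V := R_CompleteNormedModule)). intros s _. unfold K.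
        replace (s * e1x + 1 * e2x) with ((s * e1x + 0 * e2x) + e2x) by ring.
        replace (s * e1y + 1 * e2y) with ((s * e1y + 0 * e2y) + e2y) by ring.
        apply (proj2 (Hper _ _)). }
      rewrite E1. unfold minus, plus, opp; simpl. ring. }
    + intros t _. apply J_der.
    + intros t _. apply param_cont. apply Kt_cont.
Qed.

End DerivAvg.

Lemma avg_deriv_zero e1x e1y e2x e2y k kx ky :
  lattice_basis e1x e1y e2x e2y -> periodic e1x e1y e2x e2y k ->
  (forall u v, derivable_pt_lim (fun s => k s v) u (kx u v)) ->
  (forall u v, derivable_pt_lim (fun t => k u t) v (ky u v)) ->
  (forall u v, cont2 kx u v) -> (forall u v, cont2 ky u v) ->
  avgC e1x e1y e2x e2y kx 0 /\ avgC e1x e1y e2x e2y ky 0.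
Proof.
  intros HG Hp H1 H2 H3 H4. unfold lattice_basis in HG.
  assert (S := avg_dir_s e1x e1y e2x e2y k kx ky Hp H1 H2 H3 H4).
  assert (T := avg_dir_t e1x e1y e2x e2y k kx ky Hp H1 H2 H3 H4).
  set (dt := e1x * e2y - e1y * e2x) in *.
  split.
  - assert (L := avgC_lin _ _ _ _ _ _ _ _ (e2y / dt) (- e1y / dt) S T).
    replace (e2y / dt * 0 + - e1y / dt * 0) with 0 in L by ring.
    eapply avgC_ext; [| exact L]. intros x y. cbv beta. unfold dt. field. auto.
  - assert (L := avgC_lin _ _ _ _ _ _ _ _ (- e2x / dt) (e1x / dt) S T).
    replace (- e2x / dt * 0 + e1x / dt * 0) with 0 in L by ring.
    eapply avgC_ext; [| exact L]. intros x y. cbv beta. unfold dt. field. auto.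
Qed.
Lemma dpl_plus f g x l1 l2 : derivable_pt_lim f x l1 -> derivable_pt_lim g x l2 ->
  derivable_pt_lim (fun s => f s + g s) x (l1 + l2).
Proof. intros; apply derivable_pt_lim_plus; auto. Qed.
Lemma dpl_mult f g x l1 l2 : derivable_pt_lim f x l1 -> derivable_pt_lim g x l2 ->
  derivable_pt_lim (fun s => f s * g s) x (l1 * g x + f x * l2).
Proof. intros; apply (derivable_pt_lim_mult f g); auto. Qed.
Lemma dpl_const c x : derivable_pt_lim (fun _ => c) x 0.
Proof. apply derivable_pt_lim_const. Qed.
Lemma dpl_eq f x l l' : derivable_pt_lim f x l -> l = l' -> derivable_pt_lim f x l'.
Proof. intros H E; subst; auto. Qed.

Record C2 (f fx fy fxx fxy fyy : R -> R -> R) : Prop := mkC2 {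
  dX : forall u v, derivable_pt_lim (fun s => f s v) u (fx u v);
  dY : forall u v, derivable_pt_lim (fun t => f u t) v (fy u v);
  dXX : forall u v, derivable_pt_lim (fun s => fx s v) u (fxx u v);
  dXY : forall u v, derivable_pt_lim (fun t => fx u t) v (fxy u v);
  dYX : forall u v, derivable_pt_lim (fun s => fy s v) u (fxy u v);
  dYY : forall u v, derivable_pt_lim (fun t => fy u t) v (fyy u v);
  c0 : forall u v, cont2 f u v;
  cX : forall u v, cont2 fx u v;
  cY : forall u v, cont2 fy u v;
  cXX : forall u v, cont2 fxx u v;
  cXY : forall u v, cont2 fxy u v;
  cYY : forall u v, cont2 fyy u v }.

Ltac dtac H := first [apply (dX _ _ _ _ _ _ H) | apply (dY _ _ _ _ _ _ H) | apply (dXX _ _ _ _ _ _ H) | apply (dXY _ _ _ _ _ _ H) | apply (dYX _ _ _ _ _ _ H) | apply (dYY _ _ _ _ _ _ H)].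

Ltac cont2_tac := repeat first [apply cont2_plus | apply cont2_mult | apply cont2_const | eapply c0; eassumption | eapply cX; eassumption | eapply cY; eassumption | eapply cXX; eassumption | eapply cXY; eassumption | eapply cYY; eassumption].

Lemma C2_family f D i j : deriv_family f D ->
  C2 (D i j) (D (S i) j) (D i (S j)) (D (S (S i)) j) (D (S i) (S j)) (D i (S (S j))).
Proof.
  intros [H0 [Hx [Hy Hc]]]. split; intros; auto.
Qed.

Lemma C2_plus f fx fy fxx fxy fyy g gx gy gxx gxy gyy :
  C2 f fx fy fxx fxy fyy -> C2 g gx gy gxx gxy gyy ->
  C2 (fun u v => f u v + g u v) (fun u v => fx u v + gx u v) (fun u v => fy u v + gy u v)
     (fun u v => fxx u v + gxx u v) (fun u v => fxy u v + gxy u v) (fun u v => fyy u v + gyy u v).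
Proof.
  intros HF HG. split; intros; try (apply dpl_plus; [dtac HF| dtac HG]); cont2_tac.
Qed.

Lemma C2_const c : C2 (fun _ _ => c) (fun _ _ => 0) (fun _ _ => 0) (fun _ _ => 0) (fun _ _ => 0) (fun _ _ => 0).
Proof. split; intros; try apply dpl_const; apply cont2_const. Qed.

Lemma C2_mult f fx fy fxx fxy fyy g gx gy gxx gxy gyy :
  C2 f fx fy fxx fxy fyy -> C2 g gx gy gxx gxy gyy ->
  C2 (fun u v => f u v * g u v) (fun u v => fx u v * g u v + f u v * gx u v)
     (fun u v => fy u v * g u v + f u v * gy u v)
     (fun u v => fxx u v * g u v + 2 * (fx u v * gx u v) + f u v * gxx u v)
     (fun u v => fxy u v * g u v + fx u v * gy u v + fy u v * gx u v + f u v * gxy u v)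
     (fun u v => fyy u v * g u v + 2 * (fy u v * gy u v) + f u v * gyy u v).
Proof.
  intros HF HG. split; intros.
  - eapply dpl_eq. apply (dpl_mult (fun s => f s v) (fun s => g s v)); [dtac HF| dtac HG]. cbv beta; ring.
  - eapply dpl_eq. apply (dpl_mult (fun s => f u s) (fun s => g u s)); [dtac HF| dtac HG]. cbv beta; ring.
  - eapply dpl_eq. apply dpl_plus; [apply (dpl_mult (fun s => fx s v) (fun s => g s v)) | apply (dpl_mult (fun s => f s v) (fun s => gx s v))]; first [dtac HF | dtac HG]. cbv beta; ring.
  - eapply dpl_eq. apply dpl_plus; [apply (dpl_mult (fun s => fx u s) (fun s => g u s)) | apply (dpl_mult (fun s => f u s) (fun s => gx u s))]; first [dtac HF | dtac HG]. cbv beta; ring.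
  - eapply dpl_eq. apply dpl_plus; [apply (dpl_mult (fun s => fy s v) (fun s => g s v)) | apply (dpl_mult (fun s => f s v) (fun s => gy s v))]; first [dtac HF | dtac HG]. cbv beta; ring.
  - eapply dpl_eq. apply dpl_plus; [apply (dpl_mult (fun s => fy u s) (fun s => g u s)) | apply (dpl_mult (fun s => f u s) (fun s => gy u s))]; first [dtac HF | dtac HG]. cbv beta; ring.
  all: cont2_tac.
Qed.

Lemma dpl_shift f x c l : derivable_pt_lim f (x + c) l -> derivable_pt_lim (fun s => f (s + c)) x l.
Proof.
  intros H eps He. destruct (H eps He) as [d Hd]. exists d. intros h Hh Hh'.
  replace (x + h + c) with (x + c + h) by ring. apply Hd; auto.
Qed.

Lemma deriv_periodic e1x e1y e2x e2y f fx fy :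
  periodic e1x e1y e2x e2y f ->
  (forall u v, derivable_pt_lim (fun s => f s v) u (fx u v)) ->
  (forall u v, derivable_pt_lim (fun t => f u t) v (fy u v)) ->
  periodic e1x e1y e2x e2y fx /\ periodic e1x e1y e2x e2y fy.
Proof.
  intros Hp Hx Hy. split; intros x y; split.
  - apply (uniqueness_limite (fun s => f s y) x).
    + apply (derivable_pt_lim_ext (fun s => f (s + e1x) (y + e1y))). intros z. apply Hp.
      apply (dpl_shift (fun s => f s (y + e1y))). apply Hx.
    + apply Hx.
  - apply (uniqueness_limite (fun s => f s y) x).
    + apply (derivable_pt_lim_ext (fun s => f (s + e2x) (y + e2y))). intros z. apply Hp.
      apply (dpl_shift (fun s => f s (y + e2y))). apply Hx.
    + apply Hx.
  - apply (uniqueness_limite (fun t => f x t) y).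
    + apply (derivable_pt_lim_ext (fun t => f (x + e1x) (t + e1y))). intros z. apply Hp.
      apply (dpl_shift (fun t => f (x + e1x) t)). apply Hy.
    + apply Hy.
  - apply (uniqueness_limite (fun t => f x t) y).
    + apply (derivable_pt_lim_ext (fun t => f (x + e2x) (t + e2y))). intros z. apply Hp.
      apply (dpl_shift (fun t => f (x + e2x) t)). apply Hy.
    + apply Hy.
Qed.

Lemma liouville e1x e1y e2x e2y g gx gy gxx gxy gyy :
  lattice_basis e1x e1y e2x e2y -> periodic e1x e1y e2x e2y g ->
  C2 g gx gy gxx gxy gyy -> (forall u v, gxx u v + gyy u v = 0) ->
  forall u v, gx u v = 0 /\ gy u v = 0.
Proof.
  intros HG Hp HC HL.
  destruct (deriv_periodic _ _ _ _ _ _ _ Hp (dX _ _ _ _ _ _ HC) (dY _ _ _ _ _ _ HC)) as [Px Py].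
  assert (A1 : avgC e1x e1y e2x e2y (fun u v => gx u v * gx u v + g u v * gxx u v) 0).
  { apply (avg_deriv_zero e1x e1y e2x e2y (fun u v => g u v * gx u v) _ (fun u v => gy u v * gx u v + g u v * gxy u v)); auto.
    - intros x y; cbv beta; split; [rewrite (proj1 (Hp x y)), (proj1 (Px x y)) | rewrite (proj2 (Hp x y)), (proj2 (Px x y))]; auto.
    - intros. eapply dpl_eq. apply (dpl_mult (fun s => g s v) (fun s => _ s v)); dtac HC. cbv beta; ring.
    - intros. eapply dpl_eq. apply (dpl_mult (fun s => g u s) (fun s => _ u s)); dtac HC. cbv beta; ring.
    - intros. cont2_tac.
    - intros. cont2_tac. }
  assert (A2 : avgC e1x e1y e2x e2y (fun u v => gy u v * gy u v + g u v * gyy u v) 0).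
  { apply (avg_deriv_zero e1x e1y e2x e2y (fun u v => g u v * gy u v) (fun u v => gx u v * gy u v + g u v * gxy u v)); auto.
    - intros x y; cbv beta; split; [rewrite (proj1 (Hp x y)), (proj1 (Py x y)) | rewrite (proj2 (Hp x y)), (proj2 (Py x y))]; auto.
    - intros. eapply dpl_eq. apply (dpl_mult (fun s => g s v) (fun s => _ s v)); dtac HC. cbv beta; ring.
    - intros. eapply dpl_eq. apply (dpl_mult (fun s => g u s) (fun s => _ u s)); dtac HC. cbv beta; ring.
    - intros. cont2_tac.
    - intros. cont2_tac. }
  assert (A := avgC_lin _ _ _ _ _ _ _ _ 1 1 A1 A2).
  replace (1 * 0 + 1 * 0) with 0 in A by ring.
  assert (A' : avgC e1x e1y e2x e2y (fun u v => gx u v * gx u v + gy u v * gy u v) 0).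
  { eapply avgC_ext; [| exact A]. intros x y. cbv beta.
    replace (gyy x y) with (- gxx x y) by (generalize (HL x y); lra). ring. }
  assert (Z := avg_pos_zero _ _ _ _ (fun u v => gx u v * gx u v + gy u v * gy u v) HG ltac:(intros x y; cbv beta; split; [rewrite (proj1 (Px x y)), (proj1 (Py x y)) | rewrite (proj2 (Px x y)), (proj2 (Py x y))]; auto)
     ltac:(intros; cont2_tac)
     ltac:(intros; nra) A').
  intros u v. specialize (Z u v). split; nra.
Qed.
Lemma dpl_minus f g x l1 l2 : derivable_pt_lim f x l1 -> derivable_pt_lim g x l2 ->
  derivable_pt_lim (fun s => f s - g s) x (l1 - l2).
Proof. intros; apply derivable_pt_lim_minus; auto. Qed.
Lemma dpl_cdiv c f x l : derivable_pt_lim f x l -> f x <> 0 ->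
  derivable_pt_lim (fun s => c / f s) x (- (c * l) / (f x)^2).
Proof.
  intros H Hn.
  assert (H2 := derivable_pt_lim_div (fun _ => c) f x 0 l (dpl_const c x) H Hn).
  eapply dpl_eq. exact H2. cbv beta. unfold Rsqr. field. auto.
Qed.

Lemma fam_dx f D x y : deriv_family f D -> derivable_pt_lim (fun s => f s y) x (D 1%nat 0%nat x y).
Proof. intros [H0 [Hx _]]. apply (derivable_pt_lim_ext (fun s => D 0%nat 0%nat s y)). intros; apply H0. apply Hx. Qed.
Lemma fam_dy f D x y : deriv_family f D -> derivable_pt_lim (fun t => f x t) y (D 0%nat 1%nat x y).
Proof. intros [H0 [_ [Hy _]]]. apply (derivable_pt_lim_ext (fun t => D 0%nat 0%nat x t)). intros; apply H0. apply Hy. Qed.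

Lemma dpl_opp f x l : derivable_pt_lim f x l -> derivable_pt_lim (fun s => - f s) x (- l).
Proof. intros; apply derivable_pt_lim_opp; auto. Qed.

Ltac ddt L := repeat first [ apply dpl_const | apply dpl_plus | apply dpl_minus | apply dpl_opp | apply dpl_mult | L ].

Section Bracket.
Variables (Lam a0 a1 a2 a3 a4 : R -> R -> R) (DL DA0 DA1 DA2 : nat -> nat -> R -> R -> R) (c2 : R).
Hypotheses (hL : deriv_family Lam DL) (h0 : deriv_family a0 DA0) (h1 : deriv_family a1 DA1) (h2 : deriv_family a2 DA2).
Hypothesis hpos : forall x y, 0 < Lam x y.
Hypothesis hPB : poisson_commute
     (fun x y p1 p2 => (p1 ^ 2 + p2 ^ 2) / (2 * Lam x y))
     (fun x y p1 p2 => a0 x y * p1 ^ 4 + a1 x y * p1 ^ 3 * p2 + a2 x y * p1 ^ 2 * p2 ^ 2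
                       + a3 x y * p1 * p2 ^ 3 + a4 x y * p2 ^ 4).
Hypothesis hK1 : forall x y, a3 x y = a1 x y.
Hypothesis hK2 : forall x y, a4 x y = c2 + a2 x y - a0 x y.

Ltac leafx := first [ apply (fam_dx Lam DL); auto | apply (fam_dx a0 DA0); auto | apply (fam_dx a1 DA1); auto | apply (fam_dx a2 DA2); auto].
Ltac leafy := first [ apply (fam_dy Lam DL); auto | apply (fam_dy a0 DA0); auto | apply (fam_dy a1 DA1); auto | apply (fam_dy a2 DA2); auto].

Lemma brk x y P Q :
  let L := Lam x y in let Lx := DL 1%nat 0%nat x y in let Ly := DL 0%nat 1%nat x y in
  let b0 := a0 x y in let b1 := a1 x y in let b2 := a2 x y in let b4 := c2 + a2 x y - a0 x y in
  let A0x := DA0 1%nat 0%nat x y in let A1x := DA1 1%nat 0%nat x y in let A2x := DA2 1%nat 0%nat x y in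
  let A0y := DA0 0%nat 1%nat x y in let A1y := DA1 0%nat 1%nat x y in let A2y := DA2 0%nat 1%nat x y in
  let S := P^2 + Q^2 in
  let Fp1 := 4 * b0 * P^3 + 3 * b1 * P^2 * Q + 2 * b2 * P * Q^2 + b1 * Q^3 in
  let Fp2 := b1 * P^3 + 2 * b2 * P^2 * Q + 3 * b1 * P * Q^2 + 4 * b4 * Q^3 in
  let Fx := A0x * P^4 + A1x * P^3 * Q + A2x * P^2 * Q^2 + A1x * P * Q^3 + (A2x - A0x) * Q^4 in
  let Fy := A0y * P^4 + A1y * P^3 * Q + A2y * P^2 * Q^2 + A1y * P * Q^3 + (A2y - A0y) * Q^4 in
  - S * Lx * Fp1 - 2 * L * P * Fx - S * Ly * Fp2 - 2 * L * Q * Fy = 0.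
Proof.
  intros.
  assert (HL : Lam x y <> 0) by (generalize (hpos x y); lra).
  assert (Ea : forall s t, a0 s t * P ^ 4 + a1 s t * P ^ 3 * Q + a2 s t * P ^ 2 * Q ^ 2 + a3 s t * P * Q ^ 3 + a4 s t * Q ^ 4
     = a0 s t * P ^ 4 + a1 s t * P ^ 3 * Q + a2 s t * P ^ 2 * Q ^ 2 + a1 s t * P * Q ^ 3 + (c2 + a2 s t - a0 s t) * Q ^ 4).
  { intros; rewrite hK1, hK2; auto. }
  assert (H := hPB x y P Q
    (- ((P^2 + Q^2) * (2 * Lx)) / (2 * L)^2) (- ((P^2 + Q^2) * (2 * Ly)) / (2 * L)^2)
    (2 * P / (2 * L)) (2 * Q / (2 * L)) Fx Fy Fp1 Fp2).
  cbv beta in H.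
  assert (B : - ((P ^ 2 + Q ^ 2) * (2 * Lx)) / (2 * L) ^ 2 * Fp1 - 2 * P / (2 * L) * Fx +
      (- ((P ^ 2 + Q ^ 2) * (2 * Ly)) / (2 * L) ^ 2 * Fp2 - 2 * Q / (2 * L) * Fy) = 0).
  { apply H.
    - apply (dpl_cdiv _ (fun s => 2 * Lam s y)). eapply dpl_eq. ddt leafx. cbv beta. unfold Lx; ring. lra.
    - apply (dpl_cdiv _ (fun s => 2 * Lam x s)). eapply dpl_eq. ddt leafy. cbv beta. unfold Ly; ring. lra.
    - apply is_derive_Reals. auto_derive. lra. unfold L. field. auto.
    - apply is_derive_Reals. auto_derive. lra. unfold L. field. auto.
    - apply (derivable_pt_lim_ext (fun s => a0 s y * P ^ 4 + a1 s y * P ^ 3 * Q + a2 s y * P ^ 2 * Q ^ 2 + a1 s y * P * Q ^ 3 + (c2 + a2 s y - a0 s y) * Q ^ 4)).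
      intros; rewrite Ea; auto.
      eapply dpl_eq. ddt leafx. cbv beta. unfold Fx, A0x, A1x, A2x. ring.
    - apply (derivable_pt_lim_ext (fun s => a0 x s * P ^ 4 + a1 x s * P ^ 3 * Q + a2 x s * P ^ 2 * Q ^ 2 + a1 x s * P * Q ^ 3 + (c2 + a2 x s - a0 x s) * Q ^ 4)).
      intros; rewrite Ea; auto.
      eapply dpl_eq. ddt leafy. cbv beta. unfold Fy, A0y, A1y, A2y. ring.
    - apply is_derive_Reals. rewrite (hK1 x y), (hK2 x y). auto_derive. auto. unfold Fp1, b0, b1, b2. ring.
    - apply is_derive_Reals. rewrite (hK1 x y), (hK2 x y). auto_derive. auto. unfold Fp2, b1, b2, b4. ring. }
  replace (- S * Lx * Fp1 - 2 * L * P * Fx - S * Ly * Fp2 - 2 * L * Q * Fy)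
    with (2 * L ^ 2 * (- ((P ^ 2 + Q ^ 2) * (2 * Lx)) / (2 * L) ^ 2 * Fp1 - 2 * P / (2 * L) * Fx +
      (- ((P ^ 2 + Q ^ 2) * (2 * Ly)) / (2 * L) ^ 2 * Fp2 - 2 * Q / (2 * L) * Fy))).
  rewrite B; ring.
  unfold S. field. unfold L; auto.
Qed.

Lemma brk_eqs x y :
  let L := Lam x y in let Lx := DL 1%nat 0%nat x y in let Ly := DL 0%nat 1%nat x y in
  let b0 := a0 x y in let b1 := a1 x y in let b2 := a2 x y in
  let A0x := DA0 1%nat 0%nat x y in let A1x := DA1 1%nat 0%nat x y in let A2x := DA2 1%nat 0%nat x y in
  let A0y := DA0 0%nat 1%nat x y in let A1y := DA1 0%nat 1%nat x y in let A2y := DA2 0%nat 1%nat x y in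
  4 * Lx * b0 + 2 * L * A0x + Ly * b1 = 0 /\
  4 * Ly * (b2 - b0) + 2 * L * (A2y - A0y) + 4 * c2 * Ly + b1 * Lx = 0 /\
  Lx * (2 * b0 - b2) + L * (2 * A0x - A2x) - Ly * b1 - L * A1y = 0 /\
  - Lx * b1 - L * A1x + 2 * c2 * Ly - Ly * (2 * b0 - b2) - L * (2 * A0y - A2y) = 0.
Proof.
  intros.
  pose proof (brk x y 1 0) as E1. pose proof (brk x y 0 1) as E2.
  pose proof (brk x y 1 1) as E3. pose proof (brk x y 1 (-1)) as E4.
  cbv zeta in E1, E2, E3, E4. unfold L, Lx, Ly, b0, b1, b2, A0x, A1x, A2x, A0y, A1y, A2y.
  ring_simplify in E1. ring_simplify in E2. ring_simplify in E3. ring_simplify in E4.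
  repeat split; lra.
Qed.

End Bracket.
Lemma deq_x (f h : R -> R -> R) u v l1 l2 : (forall a b, f a b = h a b) ->
  derivable_pt_lim (fun s => f s v) u l1 -> derivable_pt_lim (fun s => h s v) u l2 -> l1 = l2.
Proof.
  intros E H1 H2. apply (uniqueness_limite (fun s => f s v) u); auto.
  apply (derivable_pt_lim_ext (fun s => h s v)). intros; rewrite E; auto. auto.
Qed.
Lemma deq_y (f h : R -> R -> R) u v l1 l2 : (forall a b, f a b = h a b) ->
  derivable_pt_lim (fun t => f u t) v l1 -> derivable_pt_lim (fun t => h u t) v l2 -> l1 = l2.
Proof.
  intros E H1 H2. apply (uniqueness_limite (fun t => f u t) v); auto.
  apply (derivable_pt_lim_ext (fun t => h u t)). intros; rewrite E; auto. auto.
Qed.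

Lemma const1 (h : R -> R) : (forall x, derivable_pt_lim h x 0) -> forall a b, h a = h b.
Proof.
  intros H a b.
  assert (D1 : forall x, Rmin a b < x < Rmax a b -> is_derive h x 0) by (intros; apply is_derive_Reals; auto).
  assert (D2 : forall x, Rmin a b <= x <= Rmax a b -> continuity_pt h x).
  { intros x _. apply derivable_continuous_pt. exists 0. apply H. }
  destruct (MVT_gen h a b (fun _ => 0) D1 D2) as [c [_ Hc]].
  lra.
Qed.

Lemma const_from_grad g gx gy :
  (forall u v, derivable_pt_lim (fun s => g s v) u (gx u v)) ->
  (forall u v, derivable_pt_lim (fun t => g u t) v (gy u v)) ->
  (forall u v, gx u v = 0 /\ gy u v = 0) -> forall u v, g u v = g 0 0.
Proof.
  intros Hx Hy Z u v.
  rewrite (const1 (fun s => g s v) ltac:(intros x; pose proof (Hx x v) as HH; rewrite (proj1 (Z x v)) in HH; exact HH) u 0).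
  apply (const1 (fun t => g 0 t) ltac:(intros x; pose proof (Hy 0 x) as HH; rewrite (proj2 (Z 0 x)) in HH; exact HH) v 0).
Qed.

Lemma C2_ext f f' fx fy fxx fxy fyy : (forall u v, f u v = f' u v) ->
  C2 f fx fy fxx fxy fyy -> C2 f' fx fy fxx fxy fyy.
Proof.
  intros E H. destruct H. split; auto.
  - intros. apply (derivable_pt_lim_ext (fun s => f s v)); auto.
  - intros. apply (derivable_pt_lim_ext (fun t => f u t)); auto.
  - intros. apply (cont2_ext f); auto.
Qed.

Lemma zero_family f D : deriv_family f D ->
  (forall u v, D 1%nat 0%nat u v = 0 /\ D 0%nat 1%nat u v = 0) ->
  forall n i j u v, (i + j = S n)%nat -> D i j u v = 0.
Proof.
  intros [H0 [Hx [Hy Hc]]] Z n. induction n; intros i j u v Hij.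
  - destruct i as [|[|i]]; destruct j as [|[|j]]; simpl in Hij; try lia.
    apply Z. apply Z.
  - destruct i as [|i].
    + destruct j as [|j]; [simpl in Hij; lia|].
      symmetry. apply (uniqueness_limite (fun t => D 0%nat j u t) v).
      apply (derivable_pt_lim_ext (fun _ => 0)). intros t. symmetry. apply IHn. lia.
      apply dpl_const. apply Hy.
    + symmetry. apply (uniqueness_limite (fun s => D i j s v) u).
      apply (derivable_pt_lim_ext (fun _ => 0)). intros s. symmetry. apply IHn. lia.
      apply dpl_const. apply Hx.
Qed.
Lemma cont2_minus f g x y : cont2 f x y -> cont2 g x y -> cont2 (fun u v => f u v - g u v) x y.
Proof. intros; apply cont2_of_2d, continuity_2d_pt_minus; apply cont2_2d; auto. Qed.

Lemma cont2_opp f x y : cont2 f x y -> cont2 (fun u v => - f u v) x y.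
Proof. intros; apply cont2_of_2d, continuity_2d_pt_opp; apply cont2_2d; auto. Qed.

Lemma fam_cont f D : deriv_family f D -> forall u v, cont2 f u v.
Proof. intros [H0 [_ [_ Hc]]] u v. apply (cont2_ext (D 0%nat 0%nat)); auto. Qed.

Ltac leafX := first [ match goal with H : deriv_family _ _ |- _ => apply (proj1 (proj2 H)) end
                    | match goal with H : deriv_family _ _ |- _ => apply (fam_dx _ _ _ _ H) end ].
Ltac leafY := first [ match goal with H : deriv_family _ _ |- _ => apply (proj1 (proj2 (proj2 H))) end
                    | match goal with H : deriv_family _ _ |- _ => apply (fam_dy _ _ _ _ H) end ].
Ltac leafC := first [ match goal with H : deriv_family _ _ |- _ => apply (proj2 (proj2 (proj2 H))) end
                    | match goal with H : deriv_family _ _ |- _ => apply (fam_cont _ _ H) end ].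
Ltac ctac := repeat first [ apply cont2_const | apply cont2_plus | apply cont2_minus | apply cont2_opp | apply cont2_mult | leafC ].
Ltac dX := eapply dpl_eq; [ ddt leafX | cbv beta; ring ].
Ltac dY := eapply dpl_eq; [ ddt leafY | cbv beta; ring ].
Lemma zero_deriv_x (f : R -> R -> R) u v l : (forall a b, f a b = 0) ->
  derivable_pt_lim (fun s => f s v) u l -> l = 0.
Proof. intros E H. apply (deq_x f (fun _ _ => 0) u v l 0 E H (dpl_const 0 u)). Qed.
Lemma zero_deriv_y (f : R -> R -> R) u v l : (forall a b, f a b = 0) ->
  derivable_pt_lim (fun t => f u t) v l -> l = 0.
Proof. intros E H. apply (deq_y f (fun _ _ => 0) u v l 0 E H (dpl_const 0 v)). Qed.
Theorem theorem4
  (e1x e1y e2x e2y : R) (hG : lattice_basis e1x e1y e2x e2y)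
  (Lam : R -> R -> R) (hLs : smooth2 Lam) (hLp : periodic e1x e1y e2x e2y Lam)
  (hLpos : forall x y, 0 < Lam x y)
  (a0 a1 a2 a3 a4 : R -> R -> R)
  (ha0 : smooth2 a0) (ha1 : smooth2 a1) (ha2 : smooth2 a2)
  (ha3 : smooth2 a3) (ha4 : smooth2 a4)
  (hp0 : periodic e1x e1y e2x e2y a0) (hp1 : periodic e1x e1y e2x e2y a1)
  (hp2 : periodic e1x e1y e2x e2y a2) (hp3 : periodic e1x e1y e2x e2y a3)
  (hp4 : periodic e1x e1y e2x e2y a4)
  (hPB : poisson_commute
     (fun x y p1 p2 => (p1 ^ 2 + p2 ^ 2) / (2 * Lam x y))
     (fun x y p1 p2 => a0 x y * p1 ^ 4 + a1 x y * p1 ^ 3 * p2 + a2 x y * p1 ^ 2 * p2 ^ 2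
                       + a3 x y * p1 * p2 ^ 3 + a4 x y * p2 ^ 4))
  (c2 : R)
  (hK1 : forall x y, a3 x y = a1 x y)
  (hK2 : forall x y, a4 x y = c2 + a2 x y - a0 x y)
  (a11 a22 a12 : R)
  (h11 : is_avg e1x e1y e2x e2y (fun x y => (2 * c2 - 2 * a0 x y + a2 x y) * Lam x y) (2 * a11))
  (h22 : is_avg e1x e1y e2x e2y (fun x y => (2 * a0 x y - a2 x y) * Lam x y) (2 * a22))
  (h12 : is_avg e1x e1y e2x e2y (fun x y => a1 x y * Lam x y) (2 * a12))
  (lam : R -> R -> R) (D : nat -> nat -> R -> R -> R) (hD : deriv_family lam D)
  (hlp : periodic e1x e1y e2x e2y lam)
  (hlap : forall x y, D 2%nat 0%nat x y + D 0%nat 2%nat x y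
                      = 2 * c2 * Lam x y - 2 * a11 - 2 * a22) :
  forall x y,
    D 1%nat 1%nat x y * (D 0%nat 4%nat x y - D 4%nat 0%nat x y)
    + 3 * (D 0%nat 3%nat x y * D 1%nat 2%nat x y - D 2%nat 1%nat x y * D 3%nat 0%nat x y)
    + 2 * (D 0%nat 2%nat x y * D 1%nat 3%nat x y - D 2%nat 0%nat x y * D 3%nat 1%nat x y)
    + 4 * a22 * D 1%nat 3%nat x y - 4 * a11 * D 3%nat 1%nat x y
    + 2 * a12 * (D 0%nat 4%nat x y - D 4%nat 0%nat x y) = 0.
Proof.
  destruct hLs as [DL hL]. destruct ha0 as [DA0 hA0]. destruct ha1 as [DA1 hA1]. destruct ha2 as [DA2 hA2].
  clear ha3 ha4.
  pose proof (brk_eqs Lam a0 a1 a2 a3 a4 DL DA0 DA1 DA2 c2 hL hA0 hA1 hA2 hLpos hPB hK1 hK2) as BR.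
  cbv zeta in BR.
  apply avg_to in h11. apply avg_to in h22. apply avg_to in h12.
  assert (lapx : forall u v, D 3%nat 0%nat u v + D 1%nat 2%nat u v = 2 * c2 * DL 1%nat 0%nat u v).
  { intros u v. apply (deq_x _ _ u v _ _ hlap); dX. }
  assert (lapy : forall u v, D 2%nat 1%nat u v + D 0%nat 3%nat u v = 2 * c2 * DL 0%nat 1%nat u v).
  { intros u v. apply (deq_y _ _ u v _ _ hlap); dY. }
  assert (lapxx : forall u v, D 4%nat 0%nat u v + D 2%nat 2%nat u v = 2 * c2 * DL 2%nat 0%nat u v).
  { intros u v. apply (deq_x _ _ u v _ _ lapx); dX. }
  assert (lapxy : forall u v, D 3%nat 1%nat u v + D 1%nat 3%nat u v = 2 * c2 * DL 1%nat 1%nat u v).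
  { intros u v. apply (deq_y _ _ u v _ _ lapx); dY. }
  assert (lapyy : forall u v, D 2%nat 2%nat u v + D 0%nat 4%nat u v = 2 * c2 * DL 0%nat 2%nat u v).
  { intros u v. apply (deq_y _ _ u v _ _ lapy); dY. }
  destruct (deriv_periodic _ _ _ _ lam (D 1%nat 0%nat) (D 0%nat 1%nat) hlp
     (fun u v => fam_dx _ _ u v hD) (fun u v => fam_dy _ _ u v hD)) as [_ Pl01].
  destruct (avg_deriv_zero e1x e1y e2x e2y (D 0%nat 1%nat) (D 1%nat 1%nat) (D 0%nat 2%nat) hG Pl01)
    as [Av11 Av02].
  { intros; leafX. } { intros; leafY. } { intros; leafC. } { intros; leafC. }


  destruct (deriv_periodic _ _ _ _ (D 0%nat 1%nat) (D 1%nat 1%nat) (D 0%nat 2%nat) Pl01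
     (fun u v => proj1 (proj2 hD) 0%nat 1%nat u v) (fun u v => proj1 (proj2 (proj2 hD)) 0%nat 1%nat u v)) as [Pl11 Pl02].
  set (gf := fun u v => Lam u v * (2 * a0 u v - a2 u v) - 2 * a22 - D 0%nat 2%nat u v).
  set (gx := fun u v => DL 1%nat 0%nat u v * (2 * a0 u v - a2 u v) + Lam u v * (2 * DA0 1%nat 0%nat u v - DA2 1%nat 0%nat u v) - D 1%nat 2%nat u v).
  set (gy := fun u v => DL 0%nat 1%nat u v * (2 * a0 u v - a2 u v) + Lam u v * (2 * DA0 0%nat 1%nat u v - DA2 0%nat 1%nat u v) - D 0%nat 3%nat u v).
  set (gxx := fun u v => DL 2%nat 0%nat u v * (2 * a0 u v - a2 u v) + 2 * DL 1%nat 0%nat u v * (2 * DA0 1%nat 0%nat u v - DA2 1%nat 0%nat u v) + Lam u v * (2 * DA0 2%nat 0%nat u v - DA2 2%nat 0%nat u v) - D 2%nat 2%nat u v).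
  set (gxy := fun u v => DL 1%nat 1%nat u v * (2 * a0 u v - a2 u v) + DL 1%nat 0%nat u v * (2 * DA0 0%nat 1%nat u v - DA2 0%nat 1%nat u v) + DL 0%nat 1%nat u v * (2 * DA0 1%nat 0%nat u v - DA2 1%nat 0%nat u v) + Lam u v * (2 * DA0 1%nat 1%nat u v - DA2 1%nat 1%nat u v) - D 1%nat 3%nat u v).
  set (gyy := fun u v => DL 0%nat 2%nat u v * (2 * a0 u v - a2 u v) + 2 * DL 0%nat 1%nat u v * (2 * DA0 0%nat 1%nat u v - DA2 0%nat 1%nat u v) + Lam u v * (2 * DA0 0%nat 2%nat u v - DA2 0%nat 2%nat u v) - D 0%nat 4%nat u v).
  assert (Cg : C2 gf gx gy gxx gxy gyy).
  { split; intros; unfold gf, gx, gy, gxx, gxy, gyy; try dX; try dY; ctac. }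
  set (wf := fun u v => Lam u v * a1 u v - 2 * a12 - D 1%nat 1%nat u v).
  set (wx := fun u v => DL 1%nat 0%nat u v * a1 u v + Lam u v * DA1 1%nat 0%nat u v - D 2%nat 1%nat u v).
  set (wy := fun u v => DL 0%nat 1%nat u v * a1 u v + Lam u v * DA1 0%nat 1%nat u v - D 1%nat 2%nat u v).
  set (wxy := fun u v => DL 1%nat 1%nat u v * a1 u v + DL 1%nat 0%nat u v * DA1 0%nat 1%nat u v + DL 0%nat 1%nat u v * DA1 1%nat 0%nat u v + Lam u v * DA1 1%nat 1%nat u v - D 2%nat 2%nat u v).
  assert (Wx : forall u v, derivable_pt_lim (fun s => wf s v) u (wx u v)) by (intros; unfold wf, wx; dX).
  assert (Wy : forall u v, derivable_pt_lim (fun t => wf u t) v (wy u v)) by (intros; unfold wf, wy; dY).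
  assert (Wxy : forall u v, derivable_pt_lim (fun t => wx u t) v (wxy u v)) by (intros; unfold wx, wxy; dY).
  assert (Wyx : forall u v, derivable_pt_lim (fun s => wy s v) u (wxy u v)) by (intros; unfold wy, wxy; dX).
  assert (CR1 : forall u v, gx u v = wy u v).
  { intros u v. destruct (BR u v) as [_ [_ [R3 _]]]. unfold gx, wy. lra. }
  assert (CR2 : forall u v, gy u v = - wx u v).
  { intros u v. destruct (BR u v) as [_ [_ [_ R4]]]. generalize (lapy u v). unfold gy, wx. lra. }
  assert (Lg : forall u v, gxx u v + gyy u v = 0).
  { intros u v.
    assert (E1 : gxx u v = wxy u v) by (apply (deq_x gx wy u v _ _ CR1); [apply Cg | apply Wyx]).
    assert (E2 : gyy u v = - wxy u v).
    { apply (deq_y gy (fun a b => - wx a b) u v _ _ CR2); [apply Cg | apply dpl_opp; apply Wxy]. }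
    lra. }
  assert (Pg : periodic e1x e1y e2x e2y gf).
  { intros x y. unfold gf. rewrite (proj1 (hLp x y)), (proj2 (hLp x y)), (proj1 (hp0 x y)), (proj2 (hp0 x y)),
      (proj1 (hp2 x y)), (proj2 (hp2 x y)), (proj1 (Pl02 x y)), (proj2 (Pl02 x y)). auto. }
  assert (Zg := liouville e1x e1y e2x e2y gf gx gy gxx gxy gyy hG Pg Cg Lg).
  assert (Kg := const_from_grad gf gx gy (dX _ _ _ _ _ _ Cg) (dY _ _ _ _ _ _ Cg) Zg).
  assert (Kw := const_from_grad wf wx wy Wx Wy
     ltac:(intros u v; rewrite <- CR1; assert (HH := CR2 u v); rewrite (proj2 (Zg u v)) in HH; split; [lra| apply Zg])).


  assert (G0 : forall u v, gf u v = 0).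
  { pose proof (avgC_lin _ _ _ _ _ _ _ _ 1 1 h22 (avgC_const e1x e1y e2x e2y (-2 * a22))) as A1.
    pose proof (avgC_lin _ _ _ _ _ _ _ _ 1 (-1) A1 Av02) as A2.
    assert (A3 : avgC e1x e1y e2x e2y gf 0).
    { replace 0 with (1 * (1 * (2 * a22) + 1 * (-2 * a22)) + -1 * 0) by ring.
      eapply avgC_ext; [| exact A2]. intros x y. unfold gf. cbv beta. ring. }
    assert (A4 : avgC e1x e1y e2x e2y gf (gf 0 0)).
    { eapply avgC_ext; [| exact (avgC_const e1x e1y e2x e2y (gf 0 0))]. intros x y. cbv beta. rewrite (Kg x y). auto. }
    intros u v. rewrite Kg. apply (avgC_unique _ _ _ _ _ _ _ A4 A3). }
  assert (W0 : forall u v, wf u v = 0).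
  { pose proof (avgC_lin _ _ _ _ _ _ _ _ 1 1 h12 (avgC_const e1x e1y e2x e2y (-2 * a12))) as A1.
    pose proof (avgC_lin _ _ _ _ _ _ _ _ 1 (-1) A1 Av11) as A2.
    assert (A3 : avgC e1x e1y e2x e2y wf 0).
    { replace 0 with (1 * (1 * (2 * a12) + 1 * (-2 * a12)) + -1 * 0) by ring.
      eapply avgC_ext; [| exact A2]. intros x y. unfold wf. cbv beta. ring. }
    assert (A4 : avgC e1x e1y e2x e2y wf (wf 0 0)).
    { eapply avgC_ext; [| exact (avgC_const e1x e1y e2x e2y (wf 0 0))]. intros x y. cbv beta. rewrite (Kw x y). auto. }
    intros u v. rewrite Kw. apply (avgC_unique _ _ _ _ _ _ _ A4 A3). }
  assert (Q02 : forall u v, D 0%nat 2%nat u v = Lam u v * (2 * a0 u v - a2 u v) - 2 * a22).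
  { intros u v. generalize (G0 u v). unfold gf. lra. }
  assert (Q11 : forall u v, D 1%nat 1%nat u v = Lam u v * a1 u v - 2 * a12).
  { intros u v. generalize (W0 u v). unfold wf. lra. }


  intros x y.
  destruct (Req_dec c2 0) as [Hc2|Hc2].
  - (* c2 = 0 : lam is harmonic, hence all its derivatives vanish *)
    assert (Hs : a11 + a22 = 0).
    { pose proof (avgC_lin _ _ _ _ _ _ _ _ 1 1 h11 h22) as A1.
      assert (A2 : avgC e1x e1y e2x e2y (fun _ _ => 0) (1 * (2 * a11) + 1 * (2 * a22))).
      { eapply avgC_ext; [| exact A1]. intros u v. cbv beta. rewrite Hc2. ring. }
      pose proof (avgC_unique _ _ _ _ _ _ _ A2 (avgC_const e1x e1y e2x e2y 0)). lra. }
    assert (C0 := C2_family lam D 0%nat 0%nat hD).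
    assert (P0 : periodic e1x e1y e2x e2y (D 0%nat 0%nat)).
    { destruct hD as [H0 _]. intros u v. rewrite !H0. apply hlp. }
    assert (L0 : forall u v, D 2%nat 0%nat u v + D 0%nat 2%nat u v = 0).
    { intros u v. rewrite hlap, Hc2. lra. }
    assert (Z0 := liouville e1x e1y e2x e2y _ _ _ _ _ _ hG P0 C0 L0).
    assert (Zr : forall i j u v, (1 <= i + j)%nat -> D i j u v = 0).
    { intros i j u v Hij. apply (zero_family lam D hD Z0 (i + j - 1)). lia. }
    rewrite !(Zr _ _ x y) by (simpl; lia). ring.


  - assert (Q03 : forall u v, D 0%nat 3%nat u v = DL 0%nat 1%nat u v * (2 * a0 u v - a2 u v) + Lam u v * (2 * DA0 0%nat 1%nat u v - DA2 0%nat 1%nat u v)).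
    { intros u v. apply (deq_y _ _ u v _ _ Q02). leafY. dY. }
    assert (Q21 : forall u v, D 2%nat 1%nat u v = DL 1%nat 0%nat u v * a1 u v + Lam u v * DA1 1%nat 0%nat u v).
    { intros u v. apply (deq_x _ _ u v _ _ Q11). leafX. dX. }
    assert (E1 : forall u v, 2 * (2 * Lam u v * DL 1%nat 0%nat u v * a0 u v + Lam u v * Lam u v * DA0 1%nat 0%nat u v)
                  + (D 1%nat 1%nat u v + 2 * a12) * DL 0%nat 1%nat u v = 0).
    { intros u v. destruct (BR u v) as [R1 _]. rewrite Q11.
      replace (2 * (2 * Lam u v * DL 1%nat 0%nat u v * a0 u v + Lam u v * Lam u v * DA0 1%nat 0%nat u v) +
        (Lam u v * a1 u v - 2 * a12 + 2 * a12) * DL 0%nat 1%nat u v)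
        with (Lam u v * (4 * DL 1%nat 0%nat u v * a0 u v + 2 * Lam u v * DA0 1%nat 0%nat u v + DL 0%nat 1%nat u v * a1 u v)) by ring.
      rewrite R1. ring. }
    assert (E2 : forall u v, 2 * (2 * Lam u v * DL 0%nat 1%nat u v * a0 u v + Lam u v * Lam u v * DA0 0%nat 1%nat u v)
                  - 2 * (DL 0%nat 1%nat u v * (D 0%nat 2%nat u v + 2 * a22) + Lam u v * D 0%nat 3%nat u v)
                  + 4 * c2 * Lam u v * DL 0%nat 1%nat u v
                  + (D 1%nat 1%nat u v + 2 * a12) * DL 1%nat 0%nat u v = 0).
    { intros u v. destruct (BR u v) as [_ [R2 _]]. rewrite Q11, Q02, Q03.
      replace (2 * (2 * Lam u v * DL 0%nat 1%nat u v * a0 u v + Lam u v * Lam u v * DA0 0%nat 1%nat u v) -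
        2 * (DL 0%nat 1%nat u v * (Lam u v * (2 * a0 u v - a2 u v) - 2 * a22 + 2 * a22) +
          Lam u v * (DL 0%nat 1%nat u v * (2 * a0 u v - a2 u v) + Lam u v * (2 * DA0 0%nat 1%nat u v - DA2 0%nat 1%nat u v))) +
        4 * c2 * Lam u v * DL 0%nat 1%nat u v + (Lam u v * a1 u v - 2 * a12 + 2 * a12) * DL 1%nat 0%nat u v)
      with (Lam u v * (4 * DL 0%nat 1%nat u v * (a2 u v - a0 u v) + 2 * Lam u v * (DA2 0%nat 1%nat u v - DA0 0%nat 1%nat u v) +
            4 * c2 * DL 0%nat 1%nat u v + a1 u v * DL 1%nat 0%nat u v)) by ring.
      rewrite R2. ring. }
    eassert (E1Y : _ = 0).
    { apply (zero_deriv_y _ x y _ E1). eapply dpl_eq. ddt leafY. reflexivity. }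
    eassert (E2X : _ = 0).
    { apply (zero_deriv_x _ x y _ E2). eapply dpl_eq. ddt leafX. reflexivity. }
    cbv beta in E1Y, E2X.
    assert (M0 : Lam x y = (D 2%nat 0%nat x y + D 0%nat 2%nat x y + 2 * a11 + 2 * a22) / (2 * c2)).
    { rewrite hlap. field. auto. }
    assert (M1 : DL 1%nat 0%nat x y = (D 3%nat 0%nat x y + D 1%nat 2%nat x y) / (2 * c2)).
    { rewrite lapx. field. auto. }
    assert (M2 : DL 0%nat 1%nat x y = (D 2%nat 1%nat x y + D 0%nat 3%nat x y) / (2 * c2)).
    { rewrite lapy. field. auto. }
    assert (M3 : DL 2%nat 0%nat x y = (D 4%nat 0%nat x y + D 2%nat 2%nat x y) / (2 * c2)).
    { rewrite lapxx. field. auto. }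
    assert (M4 : DL 1%nat 1%nat x y = (D 3%nat 1%nat x y + D 1%nat 3%nat x y) / (2 * c2)).
    { rewrite lapxy. field. auto. }
    assert (M5 : DL 0%nat 2%nat x y = (D 2%nat 2%nat x y + D 0%nat 4%nat x y) / (2 * c2)).
    { rewrite lapyy. field. auto. }
    match type of E1Y with ?A = 0 => match type of E2X with ?B = 0 => match goal with |- ?C = 0 =>
      assert (HC : C = - 2 * c2 * (B - A)) end end end.
    { rewrite M0, M1, M2, M3, M4, M5. field. auto. }
    rewrite HC, E1Y, E2X. ring.
Qed.
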